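(* Let $d\geq 1$, $1\leq a\leq d+1$, and $0<m_1<m_2\leq 2d+2$ be integers. If $m_1\geq a$ and $m_2\geq a+d+1$ with $(m_1,m_2)\neq(a,a+d+1)$, then $$\lim_{n\to\infty}\left(h_d^{(a)}(n)-\ell_{2d+2}^{(m_1,m_2)}(n)\right)=+\infty;$$ if $m_1\leq a$ and $m_2\leq a+d+1$ with $(m_1,m_2)\neq(a,a+d+1)$, then this limit is $-\infty$; and if $(m_1,m_2)=(a,a+d+1)$ then $h_d^{(a)}(n)=\ell_{2d+2}^{(m_1,m_2)}(n)$ for all $n$.
   Context: A partition is a finite nonincreasing sequence of positive integers (its parts); its size is not fixed. The perimeter of a partition with largest part $\alpha$ and $\lambda$ parts is $\alpha+\lambda-1$. A partition has $d$-distinct parts if any two of its parts differ by at least $d$. $h_d^{(a)}(n)$ is the number of partitions of perimeter $n$ whose parts are $d$-distinct and all $\geq a$. For $0<m_1<m_2\le m$, $\ell_m^{(m_1,m_2)}(n)$ is the number of partitions of perimeter $n$ all of whose parts are congruent to $m_1$ or $m_2$ modulo $m$. *)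

(* Defs.v *)
From mathcomp Require Import all_boot all_order all_algebra.
Set Implicit Arguments. Unset Strict Implicit. Unset Printing Implicit Defensive.

(* A partition: a nonempty, nonincreasing finite sequence of positive integers
   (the empty sequence has no largest part, hence no perimeter). *)
Definition is_partition (s : seq nat) : bool :=
  [&& s != [::], sorted geq s & all (fun x => 0 < x) s].

(* largest part = head of a nonincreasing sequence; perimeter = alpha + lambda - 1 *)
Definition perimeter (s : seq nat) : nat := head 0 s + size s - 1.

Definition d_distinct (d : nat) (s : seq nat) : bool :=
  pairwise (fun x y => y + d <= x) s.

(* Number of partitions of perimeter n satisfying P.  A partition of perimeter
   n >= 1 has at most n parts, each at most n, so it is enumerated among the
   k-tuples (k <= n) with entries in 'I_(n.+1). *)
Definition count_perim (P : seq nat -> bool) (n : nat) : nat :=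
  \sum_(k < n.+1)
     #|[set t : k.-tuple 'I_n.+1 |
         let s := map val t in
         [&& is_partition s, perimeter s == n & P s]]|.

Definition h_da (d a n : nat) : nat :=
  count_perim (fun s => d_distinct d s && all (fun x => a <= x) s) n.

Definition l_m (m m1 m2 n : nat) : nat :=
  count_perim (fun s => all (fun x => (x == m1 %[mod m]) || (x == m2 %[mod m])) s) n.

Definition tends_to_pinfty (u : nat -> int) : Prop :=
  forall M : int, exists N : nat, forall n, (N <= n)%N -> (M <= u n)%R.

Definition tends_to_minfty (u : nat -> int) : Prop :=
  forall M : int, exists N : nat, forall n, (N <= n)%N -> (u n <= M)%R.

(* Main.v *)
Require Import Defs.
From mathcomp Require Import all_boot all_order all_algebra.
From mathcomp Require Import zify.
Set Implicit Arguments. Unset Strict Implicit. Unset Printing Implicit Defensive.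

Definition allseqs k N : seq (seq nat) :=
  map (fun t : k.-tuple 'I_N => map val t) (enum [set: k.-tuple 'I_N]).

Lemma mem_allseqs s k N :
  (s \in allseqs k N) = (size s == k) && all (fun x => x < N) s.
Proof.
rewrite /allseqs; apply/mapP/andP => [[t _ ->]|[/eqP Hs Ha]].
  rewrite size_map size_tuple; split => //.
  by rewrite all_map; apply/allP => x _ /=.
have E : map val (pmap (insub : nat -> option 'I_N) s) = s.
  rewrite (pmap_filter (insubK 'I_N)).
  rewrite (eq_filter (isSome_insub 'I_N)).
  exact/all_filterP.
have Hsz : size (pmap (insub : nat -> option 'I_N) s) == k.
  by rewrite -(size_map val) E Hs.
by exists (Tuple Hsz); rewrite ?mem_enum ?inE //.
Qed.

Lemma uniq_allseqs k N : uniq (allseqs k N).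
Proof.
rewrite map_inj_uniq ?enum_uniq // => t1 t2 H.
by apply: val_inj; apply: (inj_map val_inj).
Qed.

Lemma card_allseqs k N (p : pred (seq nat)) :
  #|[set t : k.-tuple 'I_N | p (map val t)]| = count p (allseqs k N).
Proof.
rewrite count_map cardsE cardE /enum_mem -size_filter.
congr size; rewrite -filter_predI; apply: eq_filter => t /=; by rewrite in_setT andbT.
Qed.

Definition U n := flatten [seq allseqs k n.+1 | k <- iota 0 n.+1].

Lemma mem_flat_allseqs s ks N :
  (s \in flatten [seq allseqs k N | k <- ks]) = (size s \in ks) && all (fun x => x < N) s.
Proof.
elim: ks => [|k ks IH] //=.
by rewrite mem_cat IH mem_allseqs in_cons; case: (size s == k); case: all; case: (_ \in _).
Qed.

Lemma uniq_flat_allseqs ks N : uniq ks -> uniq (flatten [seq allseqs k N | k <- ks]).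
Proof.
elim: ks => [|k ks IH] //= /andP [Hk Hks].
rewrite cat_uniq uniq_allseqs IH // andbT /=.
apply/hasPn => s; rewrite mem_flat_allseqs => /andP [Hs _].
rewrite mem_allseqs; apply/negP => /andP [/eqP E _].
by move: Hs; rewrite E (negbTE Hk).
Qed.

Lemma mem_U s n : (s \in U n) = (size s <= n) && all (fun x => x <= n) s.
Proof. by rewrite /U mem_flat_allseqs mem_iota. Qed.

Lemma uniq_U n : uniq (U n).
Proof. by apply: uniq_flat_allseqs; apply: iota_uniq. Qed.

Definition Qn (P : seq nat -> bool) n (s : seq nat) :=
  [&& is_partition s, perimeter s == n & P s].

Lemma count_perimE P n : count_perim P n = count (Qn P n) (U n).
Proof.
transitivity (\sum_(k < n.+1) count (Qn P n) (allseqs k n.+1)).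
  apply: eq_bigr => k _; exact: card_allseqs.
rewrite -(big_mkord xpredT (fun k => count (Qn P n) (allseqs k n.+1))).
by rewrite /U count_flatten -map_comp sumnE big_map.
Qed.

Lemma count_bij (T1 T2 : eqType) (f : T1 -> T2) (l1 : seq T1) (l2 : seq T2)
  (Q1 : pred T1) (Q2 : pred T2) :
  uniq l1 -> uniq l2 ->
  (forall x y, x \in l1 -> Q1 x -> y \in l1 -> Q1 y -> f x = f y -> x = y) ->
  (forall x, x \in l1 -> Q1 x -> (f x \in l2) && Q2 (f x)) ->
  (forall y, y \in l2 -> Q2 y -> exists2 x, (x \in l1) && Q1 x & y = f x) ->
  count Q1 l1 = count Q2 l2.
Proof.
move=> u1 u2 inj fw bw.
rewrite -!size_filter -(size_map f).
apply: perm_size; apply: uniq_perm.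
- rewrite map_inj_in_uniq ?filter_uniq // => x y.
  rewrite !mem_filter => /andP [q1 m1] /andP [q2 m2]; exact: inj.
- exact: filter_uniq.
move=> y; apply/mapP/idP => [[x]|].
  rewrite mem_filter => /andP [q1 m1] ->.
  by rewrite mem_filter; case/andP: (fw x m1 q1) => -> ->.
rewrite mem_filter => /andP [q2 m2].
by case: (bw y m2 q2) => x /andP [m1 q1] ->; exists x; rewrite // mem_filter q1.
Qed.

Lemma count_split (T : eqType) (l : seq T) (Q : pred T) (key : T -> nat) n :
  (forall x, x \in l -> Q x -> key x < n) ->
  count Q l = \sum_(i < n) count (fun x => Q x && (key x == i)) l.
Proof.
elim: l => [|x l IH] H /=; first by rewrite big1.
rewrite IH; last by move=> y Hy; apply: H; rewrite in_cons Hy orbT.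
rewrite big_split /=; congr (_ + _).
case Qx: (Q x) => /=; last by rewrite big1.
have Hk : key x < n by apply: H; rewrite ?in_cons ?eqxx.
rewrite (bigD1 (Ordinal Hk)) //= eqxx big1 // => i Hi.
case E: (key x == i) => //; move: Hi; rewrite -val_eqE /= (eqP E) eqxx //.
Qed.

Lemma count_sorted_leq j M : count (sorted leq) (allseqs j M.+1) = 'C(j + M, j).
Proof. by rewrite -card_allseqs card_sorted_tuples. Qed.

Lemma count_sorted_geq j M : count (sorted geq) (allseqs j M.+1) = 'C(j + M, j).
Proof.
rewrite -count_sorted_leq; apply: (count_bij (f := @rev nat)).
- exact: uniq_allseqs.
- exact: uniq_allseqs.
- by move=> x y _ _ _ _; exact: (can_inj revK).
- move=> x; rewrite !mem_allseqs size_rev all_rev => -> /=.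
  by rewrite rev_sorted.
move=> y; rewrite mem_allseqs => Hy Sy; exists (rev y); last by rewrite revK.
by rewrite mem_allseqs size_rev all_rev Hy /= rev_sorted.
Qed.

Definition idx (r : nat -> nat) x := find (fun i => r i == x) (iota 0 x.+1).

Lemma r_ge (r : nat -> nat) : (forall i, r i < r i.+1) -> forall i, i <= r i.
Proof. move=> Hr; elim=> // i IH; exact: leq_ltn_trans IH (Hr i). Qed.

Lemma r_mono (r : nat -> nat) : (forall i, r i < r i.+1) -> {mono r : i j / i <= j}.
Proof. move=> Hr; apply: leq_mono; exact: homo_ltn ltn_trans Hr. Qed.

Lemma idxK (r : nat -> nat) x : (forall i, r i < r i.+1) ->
  (exists i, r i = x) -> r (idx r x) = x.
Proof.
move=> Hr [i Hi].
have Hh : has (fun k => r k == x) (iota 0 x.+1).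
  apply/hasP; exists i; last by rewrite Hi.
  rewrite mem_iota add0n ltnS -Hi; exact: r_ge.
have := nth_find 0 Hh; rewrite -/(idx r x) nth_iota ?add0n; first by move/eqP.
by rewrite -(size_iota 0 x.+1) -has_find.
Qed.

Lemma idx_r (r : nat -> nat) i : (forall i, r i < r i.+1) -> idx r (r i) = i.
Proof.
move=> Hr; apply: (incn_inj (r_mono Hr)); apply: idxK => //; by exists i.
Qed.

Definition Tm n rho i := if rho <= n then 'C((n - rho) + i, i) else 0.

Lemma binC' A B : 'C(A + B, A) = 'C(A + B, B).
Proof. by rewrite -(bin_sub (leq_addl A B)) addnK. Qed.

Lemma geq_trans : transitive geq.
Proof. move=> y x z /= H1 H2; exact: leq_trans H2 H1. Qed.

Lemma l_term (R : pred nat) (r : nat -> nat) n i :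
  (forall i, r i < r i.+1) -> 0 < r 0 -> (forall i, R (r i)) ->
  (forall x, 0 < x -> R x -> exists i, r i = x) ->
  count (fun s => Qn (all R) n s && (idx r (head 0 s) == i)) (U n) = Tm n (r i) i.
Proof.
move=> Hr Hr0 HR1 HR2.
have rmono := r_mono Hr.
have rinj : injective r := incn_inj rmono.
have rpos : forall k, 0 < r k.
  by move=> k; apply: leq_trans Hr0 _; rewrite rmono.
have Hx : forall x, 0 < x -> R x -> r (idx r x) = x.
  by move=> x x0 Rx; apply: idxK => //; apply: HR2.
rewrite /Tm; case: ifP => Hri; last first.
  apply/eqP; rewrite -leqn0 leqNgt -has_count; apply/hasPn => s _.
  apply/negP => /andP [/and3P [/and3P [Hne _ Hpos] /eqP Hp HRs] /eqP Hi].
  case: s Hne Hp Hi Hpos HRs => // x t _ /= Hp Hix /andP [x0 _] /andP [Rx _].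
  have : x <= n by rewrite -Hp /perimeter /=; lia.
  by rewrite -(Hx x x0 Rx) Hix Hri.
rewrite -binC' -count_sorted_geq; symmetry.
apply: (count_bij (f := fun v => map r (i :: v))).
- exact: uniq_allseqs.
- exact: uniq_U.
- move=> x y _ _ _ _ /= [] /(inj_map rinj); done.
- move=> v; rewrite mem_allseqs => /andP [/eqP Hsz Hall] Hs.
  have Hall' : all (fun y => r y <= r i) v.
    by apply/allP => y /(allP Hall); rewrite rmono ltnS.
  rewrite mem_U /Qn /is_partition /perimeter /= size_map Hsz idx_r // eqxx andbT.
  apply/and5P; split.
  + apply/and3P; split => //.
      by have := rpos i; lia.
    by rewrite all_map; apply/allP => y Hy; apply: leq_trans Hri; exact: (allP Hall' y Hy).
  + apply/and3P; split; last 1 first.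
    * by rewrite all_map; apply/allP => y _; exact: rpos.
    * rewrite (path_sortedE geq_trans) all_map sorted_map; apply/andP; split.
        by apply/allP => y Hy; exact: (allP Hall' y Hy).
      by apply: sub_sorted Hs => x y /=; rewrite rmono.
    * exact: rpos.
  + apply/eqP; lia.
  + exact: HR1.
  + by rewrite all_map; apply/allP => y _; exact: HR1.
move=> s; rewrite mem_U => /andP [Hsz Hle] /andP [/and3P [/and3P [Hne Hsort Hpos] /eqP Hp HRs] /eqP Hi].
case: s Hne Hsz Hle Hsort Hpos Hp HRs Hi => // x t _ Hsz Hle Hsort /= /andP [x0 Hpos] Hp /andP [Rx HRs] Hi.
have Ex : x = r i by rewrite -Hi Hx.
have Et : map r (map (idx r) t) = t.
  rewrite -map_comp -[RHS]map_id; apply/eq_in_map => y Hy /=.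
  by apply: Hx; [exact: (allP Hpos y Hy) | exact: (allP HRs y Hy)].
exists (map (idx r) t); last by rewrite /= Et Ex.
move: Hsort; rewrite /= (path_sortedE geq_trans) => /andP [Hhd Hst].
rewrite mem_allseqs size_map; apply/andP; split; first (apply/andP; split).
- move: Hp; rewrite /perimeter /= Ex => Hp; apply/eqP; lia.
- rewrite all_map; apply/allP => y Hy /=; rewrite ltnS -rmono Hx.
  + by rewrite -Ex; exact: (allP Hhd y Hy).
  + exact: (allP Hpos y Hy).
  + exact: (allP HRs y Hy).
rewrite sorted_map; apply: (sub_in_sorted (P := fun y => (0 < y) && R y)) Hst.
  move=> y z /andP [y0 Ry] /andP [z0 Rz] /= Hyz; rewrite -rmono !Hx //.
by apply/allP => y Hy; rewrite (allP Hpos y Hy) (allP HRs y Hy).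
Qed.

Lemma l_count (R : pred nat) (r : nat -> nat) n :
  (forall i, r i < r i.+1) -> 0 < r 0 -> (forall i, R (r i)) ->
  (forall x, 0 < x -> R x -> exists i, r i = x) ->
  count_perim (all R) n = \sum_(i < n) Tm n (r i) i.
Proof.
move=> Hr Hr0 HR1 HR2.
have rlt : forall i, i < r i.
  by elim=> // i IH; exact: leq_ltn_trans IH (Hr i).
rewrite count_perimE (count_split (key := fun s => idx r (head 0 s)) (n := n)).
  by apply: eq_bigr => i _; apply: l_term.
move=> s _ /and3P [/and3P [Hne _ Hpos] /eqP Hp HRs].
case: s Hne Hp Hpos HRs => // x t _ /= Hp /andP [x0 _] /andP [Rx _].
have E : r (idx r x) = x by apply: idxK => //; apply: HR2.
have := rlt (idx r x); rewrite E /perimeter /= in Hp *; lia.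
Qed.

Fixpoint gg (a d : nat) (u : seq nat) : seq nat :=
  if u is x :: w then (x + a + d * size w) :: gg a d w else [::].

Fixpoint gi (a d : nat) (s : seq nat) : seq nat :=
  if s is y :: w then (y - a - d * size w) :: gi a d w else [::].

Lemma size_gg a d u : size (gg a d u) = size u.
Proof. by elim: u => //= x w ->. Qed.

Lemma size_gi a d u : size (gi a d u) = size u.
Proof. by elim: u => //= x w ->. Qed.

Lemma giK a d u : gi a d (gg a d u) = u.
Proof. by elim: u => //= x w ->; rewrite size_gg; congr (_ :: _); lia. Qed.

Definition dgap d := fun x y : nat => y + d <= x.

Lemma dgap_trans d : transitive (dgap d).
Proof. move=> y x z; rewrite /dgap; lia. Qed.

Lemma gg_path a d x u : path geq x u -> path (dgap d) (x + a + d * size u) (gg a d u).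
Proof.
elim: u x => //= y w IH x /andP [Hxy Hp]; rewrite IH // andbT /dgap mulnS; lia.
Qed.

Lemma gg_ge a d u : all (fun x => a <= x) (gg a d u).
Proof. elim: u => //= x w ->; rewrite andbT; lia. Qed.

Lemma gi_bound a d y w : path (dgap d) y w -> all (fun x => a <= x) (y :: w) ->
  a + d * size w <= y.
Proof.
elim: w y => /= [|z w IH] y; first by rewrite muln0 addn0 andbT.
move=> /andP [Hyz Hp] /and3P [Hy Hz Hw].
have := IH z Hp; rewrite Hz Hw => /(_ isT); move: Hyz; rewrite /dgap mulnS; lia.
Qed.

Lemma ggK a d s : sorted (dgap d) s -> all (fun x => a <= x) s -> gg a d (gi a d s) = s.
Proof.
elim: s => //= y w IH Hp Ha.
have Hb := gi_bound Hp Ha.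
rewrite size_gi IH; first by congr (_ :: _); lia.
- exact: path_sorted Hp.
- by case/andP: Ha.
Qed.

Lemma gi_path a d y w : path (dgap d) y w -> all (fun x => a <= x) (y :: w) ->
  path geq (y - a - d * size w) (gi a d w).
Proof.
elim: w y => //= z w IH y /andP [Hyz Hp] /and3P [Hy Hz Hw].
have Hall : all (fun x => a <= x) (z :: w) by apply/andP.
have Hzb := gi_bound Hp Hall.
rewrite (IH z Hp Hall) andbT; move: Hyz; rewrite /dgap mulnS; lia.
Qed.

Definition Ph d a := fun s : seq nat => d_distinct d s && all (fun x => a <= x) s.

Definition rc a d i := a + i + d * i.

Lemma h_term d a n i : 0 < a ->
  count (fun s => Qn (Ph d a) n s && ((size s).-1 == i)) (U n) = Tm n (rc a d i) i.
Proof.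
move=> a0.
rewrite /Tm; case: ifP => Hri; last first.
  apply/eqP; rewrite -leqn0 leqNgt -has_count; apply/hasPn => s _.
  apply/negP => /andP [/and3P [/and3P [Hne Hsort _] /eqP Hp /andP [Hd Ha]] /eqP Hi].
  case: s Hne Hsort Hp Hd Ha Hi => // y w _ _ Hp Hd Ha /= Hi.
  have Hs : sorted (dgap d) (y :: w) by rewrite (sorted_pairwise (@dgap_trans d)).
  have := gi_bound Hs Ha; move: Hp Hri; rewrite /perimeter /rc /= Hi; lia.
rewrite addnC -count_sorted_geq; symmetry.
apply: (count_bij (f := fun v => gg a d ((n - rc a d i) :: v))).
- exact: uniq_allseqs.
- exact: uniq_U.
- by move=> x y _ _ _ _ /(can_inj (@giK a d)) [].
- move=> v; rewrite mem_allseqs => /andP [/eqP Hsz Hall] Hs.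
  have Hp0 : path geq (n - rc a d i) v.
    rewrite (path_sortedE geq_trans) Hs andbT.
    by apply/allP => y /(allP Hall); rewrite ltnS.
  have Hp := gg_path a d Hp0.
  have Hp' := Hp; rewrite (path_sortedE (@dgap_trans d)) in Hp'.
  case/andP: Hp' => Hhd _.
  have Hga := gg_ge a d v.
  rewrite mem_U /Qn /is_partition /perimeter /Ph /d_distinct /= size_gg Hsz.
  have Hh : n - rc a d i + a + d * i <= n by move: Hri; rewrite /rc; lia.
  rewrite Hsz in Hp Hhd.
  have Hgs : sorted (dgap d) (gg a d v) := path_sorted Hp.
  apply/and3P; split => //.
  + apply/and3P; split => //.
    * by move: Hri; rewrite /rc; lia.
    * apply/allP => y Hy; have := allP Hhd y Hy; rewrite /dgap; lia.
  apply/and5P; split.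
  + apply/and3P; split.
    * by apply: sub_path Hp => x y; rewrite /dgap /=; lia.
    * lia.
    * by apply/allP => y Hy; have := allP Hga y Hy; lia.
  + apply/eqP; move: Hri; rewrite /rc; lia.
  + apply/andP; split; first by [].
    by rewrite -(sorted_pairwise (@dgap_trans d)).
  + lia.
  + exact: Hga.
move=> s; rewrite mem_U => /andP [Hsz Hle] /andP [/and3P [/and3P [Hne Hsort _] /eqP Hp /andP [Hd Ha]] /eqP Hi].
case: s Hne Hsort Hp Hd Ha Hi Hsz Hle => // y w _ _ Hp Hd Ha /= Hi Hsz Hle.
have Hs : sorted (dgap d) (y :: w) by rewrite (sorted_pairwise (@dgap_trans d)).
have Hb := gi_bound Hs Ha.
have Hgp := gi_path Hs Ha.
have E : y - a - d * size w = n - rc a d i.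
  by move: Hp; rewrite /perimeter /rc /= Hi; lia.
exists (gi a d w).
  rewrite mem_allseqs size_gi Hi eqxx /=.
  move: Hgp; rewrite E (path_sortedE geq_trans) => /andP [H1 ->]; rewrite andbT.
  by apply/allP => x /(allP H1); rewrite /= ltnS.
by rewrite -E -[LHS](ggK Hs Ha).
Qed.

Lemma h_count d a n : 0 < a ->
  h_da d a n = \sum_(i < n) Tm n (rc a d i) i.
Proof.
move=> a0.
rewrite /h_da -/(Ph d a) count_perimE (count_split (key := fun s => (size s).-1) (n := n)).
  by apply: eq_bigr => i _; apply: h_term.
move=> s Hs /and3P [/and3P [Hne _ _] /eqP Hp _].
case: s Hne Hp Hs => // y w _ Hp; rewrite mem_U /= => /andP [Hsz Hle]; lia.
Qed.

Lemma bin_ge k y : 0 < k -> y <= 'C(y + k, k).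
Proof.
case: k => // k _; elim: k => [|k IH]; first by rewrite addn1 bin1.
rewrite addnS binS; apply: leq_trans (leq_addl _ _); exact: IH.
Qed.

Lemma Tm_mono n rho rho' i : rho <= rho' -> Tm n rho' i <= Tm n rho i.
Proof.
move=> H; rewrite /Tm; case: ifP => // H'.
rewrite (leq_trans H H'); apply: leq_bin2l; lia.
Qed.

Lemma Tm_grow n rho rho' i : rho < rho' -> rho' <= n -> 2 <= i ->
  Tm n rho' i + (n - rho') <= Tm n rho i.
Proof.
move=> H1 H2 Hi; rewrite /Tm H2 (leq_trans (ltnW H1) H2).
case: i Hi => // i Hi.
have E : n - rho + i.+1 = (n - rho' + i.+1).+1 + (n - rho - (n - rho').+1) by lia.
rewrite E.
apply: leq_trans (leq_bin2l _ (leq_addr _ _)).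
rewrite binS leq_add2l.
have E2 : n - rho' + i.+1 = (n - rho').+1 + i by lia.
rewrite E2; apply: leq_trans (bin_ge _ _); lia.
Qed.

Lemma sum_cmp n (f g : nat -> nat) i0 e :
  (forall i, f i <= g i) -> i0 < n -> f i0 + e <= g i0 ->
  \sum_(i < n) f i + e <= \sum_(i < n) g i.
Proof.
move=> Hfg Hi0 He.
rewrite (bigD1 (Ordinal Hi0) (F := fun i : 'I_n => f i)) // (bigD1 (Ordinal Hi0) (F := fun i : 'I_n => g i)) //=.
have H : \sum_(i < n | i != Ordinal Hi0) f i <= \sum_(i < n | i != Ordinal Hi0) g i.
  by apply: leq_sum => i _; apply: Hfg.
by rewrite addnAC; apply: leq_add.
Qed.

Lemma sum_diverge (r1 r2 : nat -> nat) i0 :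
  (forall i, r1 i <= r2 i) -> 2 <= i0 -> r1 i0 < r2 i0 ->
  forall M : nat, exists N, forall n, N <= n ->
    \sum_(i < n) Tm n (r2 i) i + M <= \sum_(i < n) Tm n (r1 i) i.
Proof.
move=> H12 Hi0 Hlt M; exists (r2 i0 + i0 + M + 1) => n Hn.
apply: (@leq_trans (\sum_(i < n) Tm n (r2 i) i + (n - r2 i0))).
  rewrite leq_add2l; lia.
apply: (sum_cmp (f := fun i => Tm n (r2 i) i) (g := fun i => Tm n (r1 i) i) (i0 := i0)).
- by move=> i; apply: Tm_mono.
- lia.
- apply: Tm_grow => //; lia.
Qed.

Definition rr (m1 m2 m : nat) i := (if odd i then m2 else m1) + i./2 * m.

Lemma rr_even m1 m2 m k : rr m1 m2 m k.*2 = m1 + k * m.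
Proof. by rewrite /rr odd_double doubleK. Qed.

Lemma rr_odd m1 m2 m k : rr m1 m2 m k.*2.+1 = m2 + k * m.
Proof. by rewrite /rr /= odd_double /= uphalf_double. Qed.

Lemma par_cases i : exists k, i = k.*2 \/ i = k.*2.+1.
Proof.
exists i./2; have H := odd_double_half i; case: (odd i) H => /= H; [right | left]; lia.
Qed.

Lemma rr_inc m1 m2 m i : 0 < m1 < m2 -> m2 <= m -> rr m1 m2 m i < rr m1 m2 m i.+1.
Proof.
move=> H1 H2; have [k [->|->]] := par_cases i.
  by rewrite rr_even rr_odd; lia.
by rewrite rr_odd -doubleS rr_even mulSn; lia.
Qed.

Unset Implicit Arguments.

Theorem mainTheorem11 (d a m1 m2 : nat) :
  1 <= d -> 1 <= a <= d.+1 -> 0 < m1 < m2 -> m2 <= (2 * d + 2) ->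
  [/\ (a <= m1 -> a + d + 1 <= m2 -> (m1, m2) <> (a, a + d + 1) ->
         tends_to_pinfty (fun n => ((h_da d a n)%:Z - (l_m (2 * d + 2) m1 m2 n)%:Z)%R)),
      (m1 <= a -> m2 <= a + d + 1 -> (m1, m2) <> (a, a + d + 1) ->
         tends_to_minfty (fun n => ((h_da d a n)%:Z - (l_m (2 * d + 2) m1 m2 n)%:Z)%R))
    & ((m1, m2) = (a, a + d + 1) -> forall n, h_da d a n = l_m (2 * d + 2) m1 m2 n)].
Proof.
move=> d1 /andP [a1 ad] /andP [m10 m12] m2m.
set m := 2 * d + 2.
set R := fun x => (x == m1 %[mod m]) || (x == m2 %[mod m]).
have Hr : forall i, rr m1 m2 m i < rr m1 m2 m i.+1.
  by move=> i; apply: rr_inc => //; rewrite m10.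
have Hr0 : 0 < rr m1 m2 m 0 by rewrite /rr /=; lia.
have HR1 : forall i, R (rr m1 m2 m i).
  move=> i; have [k [->|->]] := par_cases i.
    by rewrite rr_even /R addnC modnMDl eqxx.
  by rewrite rr_odd /R addnC modnMDl eqxx orbT.
have HR2 : forall x, 0 < x -> R x -> exists i, rr m1 m2 m i = x.
  move=> x x0 /orP [] /eqP Hx.
    exists (x %/ m).*2; rewrite rr_even.
    move: Hx; rewrite (modn_small (m := m1)) /m; [lia | lia].
  case: (ltnP m2 m) => Hm2.
    exists (x %/ m).*2.+1; rewrite rr_odd.
    move: Hx; rewrite (modn_small (m := m2)) /m; [lia | lia].
  have Em2 : m2 = m by rewrite /m; lia.
  exists (x %/ m).-1.*2.+1; rewrite rr_odd.
  move: Hx; rewrite Em2 modnn => Hx.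
  have := divn_eq x m; rewrite Hx addn0.
  case: (x %/ m) => [|q] /=; first by lia.
  by rewrite mulSn => ->.
have Hl : forall n, l_m m m1 m2 n = \sum_(i < n) Tm n (rr m1 m2 m i) i.
  by move=> n; rewrite /l_m -(l_count n Hr Hr0 HR1 HR2).
have Hh : forall n, h_da d a n = \sum_(i < n) Tm n (rc a d i) i.
  by move=> n; apply: h_count.
split.
- move=> Ha1 Ha2 Hne M.
  have [i0 [Hi0 [Hle Hlt]]] : exists i0, 2 <= i0 /\ (forall i, rc a d i <= rr m1 m2 m i)
      /\ rc a d i0 < rr m1 m2 m i0.
    have Hle : forall i, rc a d i <= rr m1 m2 m i.
      move=> i; have [k [->|->]] := par_cases i.
        by rewrite rr_even /rc /m -!muln2; nia.
      by rewrite rr_odd /rc /m -!muln2; nia.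
    case: (ltnP a m1) => Hm1.
      exists 2; split => //; split => //; rewrite -[2]/(1.*2) rr_even /rc /m; lia.
    exists 3; split => //; split => //; rewrite -[3]/(1.*2.+1) rr_odd /rc /m.
    have : m2 != a + d + 1 by apply/eqP => E; apply: Hne; rewrite E; congr pair; lia.
    lia.
  have [N HN] := sum_diverge Hle Hi0 Hlt (absz M).
  exists N => n Hn; have := HN n Hn; rewrite -Hl -Hh; lia.
- move=> Ha1 Ha2 Hne M.
  have [i0 [Hi0 [Hle Hlt]]] : exists i0, 2 <= i0 /\ (forall i, rr m1 m2 m i <= rc a d i)
      /\ rr m1 m2 m i0 < rc a d i0.
    have Hle : forall i, rr m1 m2 m i <= rc a d i.
      move=> i; have [k [->|->]] := par_cases i.
        by rewrite rr_even /rc /m -!muln2; nia.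
      by rewrite rr_odd /rc /m -!muln2; nia.
    case: (ltnP m1 a) => Hm1.
      exists 2; split => //; split => //; rewrite -[2]/(1.*2) rr_even /rc /m; lia.
    exists 3; split => //; split => //; rewrite -[3]/(1.*2.+1) rr_odd /rc /m.
    have : m2 != a + d + 1 by apply/eqP => E; apply: Hne; rewrite E; congr pair; lia.
    lia.
  have [N HN] := sum_diverge Hle Hi0 Hlt (absz M).
  exists N => n Hn; have := HN n Hn; rewrite -Hl -Hh; lia.
- case=> E1 E2 n; rewrite Hh Hl; apply: eq_bigr => i _; congr Tm.
  have [k [->|->]] := par_cases i.
    by rewrite rr_even /rc /m E1 -!muln2; nia.
  by rewrite rr_odd /rc /m E2 -!muln2; nia.
Qed.
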